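(* Let $n\ge1$, $m\ge1$ be integers, $q=\exp\bigl(\tfrac{2\pi i}{m+n+1}\bigr)$, and consider $$\partial^{n+1}y+(-1)^n\,(x^m+\lambda^{n+1})\,y=0,\qquad \partial=\tfrac{d}{dx},\ \lambda\in\mathbb{C}.$$ Let $y(x,\lambda)$ be a solution of this equation for each $\lambda$ (in the paper: the solution subdominant as $x\to\infty$ in the sector $|\arg x|\le\pi/(m+n+1)$), set $y_k(x,\lambda)=q^{nk/2}\,y(xq^{-k},\lambda q^k)$ for $k\in\mathbb{Z}$ (each is again a solution), and assume that for every $k$ the functions $y_k,y_{k+1},\dots,y_{k+n}$ are linearly independent. Let $\Phi_k$ be the $(n+1)\times(n+1)$ matrix whose $(i+1,j+1)$ entry is $\partial^i y_{k+j}$ ($0\le i,j\le n$), and for $\ell\ge1$ let $S^{(\ell)}_k$ be the constant matrix with $\Phi_k=\Phi_{k+\ell}S^{(\ell)}_k$; write $S^{(\ell)}(\lambda)$ for $S^{(\ell)}_0$ regarded as a function of $\lambda$, so that $S^{(\ell)}_k=S^{(\ell)}(\lambda q^k)$, and let $S^{(\ell)}_{i,j}(\lambda)$ denote its entries. Define $T^{(1)}_\ell(\lambda)=S^{(\ell)}_{1,1}(\lambda q^{-(\ell-1)/2})$ for $\ell\ge1$, $T^{(1)}_0=1$, $T^{(1)}_\ell=0$ for $\ell<0$. For a Young diagram $\mu=(\mu_1,\mu_2,\dots)$ with transpose $\mu'$ define $$T_\mu(\lambda)=\det_{1\le i,j\le\mu'_1}\Bigl(T^{(1)}_{\mu_i-i+j}\bigl(\lambda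 q^{-(\mu'_1-\mu_1+\mu_i-i-j+1)/2}\bigr)\Bigr).$$ Then for every $\ell\ge1$ and every $1\le k\le n+1$, $$S^{(\ell)}_{k,1}(\lambda)=(-1)^{k+1}\,T_\mu\bigl(q^{(\ell+k-2)/2}\lambda\bigr),$$ where $\mu=(\ell,1,\dots,1)$ is the hook-shaped Young diagram of first row length $\ell$ and height $k$.
   Context: Fractional powers $q^{s}$ mean $\exp\bigl(\tfrac{2\pi i s}{m+n+1}\bigr)$. The Stokes matrix $S^{(1)}_k$ connects the fundamental systems $\Phi_k$ and $\Phi_{k+1}$; the generalized Stokes matrix $S^{(\ell)}_k$ connects $\Phi_k$ and $\Phi_{k+\ell}$. *)

(* Defs.v *)
From HB Require Import structures.
From mathcomp Require Import all_boot all_algebra.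
From mathcomp Require Import all_classical all_reals all_analysis.
From mathcomp Require Import complex.
Import GRing.Theory Num.Theory.
Import numFieldNormedType.Exports.
Set Implicit Arguments. Unset Strict Implicit. Unset Printing Implicit Defensive.
Local Open Scope ring_scope.

Definition Cx (R : realType) : numFieldType := R[i].

Definition qpow (R : realType) (m n : nat) (s : R) : Cx R :=
  let th := 2 * pi * s / (m + n + 1)%:R in Complex (cos th) (sin th).

Definition yk (R : realType) (m n : nat) (y : Cx R -> Cx R -> Cx R)
  (k : int) (x lam : Cx R) : Cx R :=
  @qpow R m n (n%:R * k%:~R / 2) * y (x * @qpow R m n (- k%:~R)) (lam * @qpow R m n k%:~R).

Definition Phi (R : realType) (m n : nat) (y : Cx R -> Cx R -> Cx R)
  (k : int) (x lam : Cx R) : 'M[Cx R]_(n.+1) :=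
  \matrix_(i < n.+1, j < n.+1)
     derive1n i (fun z : Cx R => @yk R m n y (k + j%:Z) z lam) x.

(* T^{(1)}_l(lam) = S^{(l)}_{1,1}(lam q^{-(l-1)/2}) for l >= 1, 1 for l = 0,
   0 for l < 0.  S l lam is the matrix S^{(l)}(lam) (0-based entries). *)
Definition T1 (R : realType) (m n : nat) (S : nat -> Cx R -> 'M[Cx R]_(n.+1))
  (l : int) (lam : Cx R) : Cx R :=
  match l with
  | Posz p.+1 => S p.+1 (lam * @qpow R m n (- (p%:R) / 2)) ord0 ord0
  | Posz 0 => 1
  | Negz _ => 0
  end.

(* T_mu for a Young diagram mu given by its list of (positive) row lengths
   mu_1 >= mu_2 >= ... ; mu'_1 = size mu.  With 1-based i = i0+1, j = j0+1:
   T_mu(lam) = det ( T^{(1)}_{mu_i - i + j}(lam q^{-(mu'_1 - mu_1 + mu_i - i - j + 1)/2}) ). *)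
Definition Tmu (R : realType) (m n : nat) (S : nat -> Cx R -> 'M[Cx R]_(n.+1))
  (mu : seq nat) (lam : Cx R) : Cx R :=
  \det (\matrix_(i < size mu, j < size mu)
     @T1 R m n S ((nth 0%N mu i)%:Z - (i.+1)%:Z + (j.+1)%:Z)
        (lam * @qpow R m n (- (((size mu)%:Z - (nth 0%N mu 0)%:Z + (nth 0%N mu i)%:Z
                              - (i.+1)%:Z - (j.+1)%:Z + 1)%:~R) / 2))).

(* Main.v *)
Require Import Defs.
From HB Require Import structures.
From mathcomp Require Import all_boot all_algebra.
From mathcomp Require Import all_classical all_reals all_analysis.
From mathcomp Require Import complex.
Import GRing.Theory Num.Theory.
Import numFieldNormedType.Exports.
Local Open Scope ring_scope.
From mathcomp Require Import ring lra.
From mathcomp Require Import zify.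

Lemma det_unit_upper (C : comNzRingType) K (A : 'M[C]_K) :
  (forall i j : 'I_K, (j < i)%N -> A i j = 0) -> (forall i, A i i = 1) -> \det A = 1.
Proof.
move=> h0 h1; rewrite -det_tr det_trig.
  by rewrite big1 // => i _; rewrite mxE h1.
by apply/is_trig_mxP => i j ij; rewrite mxE h0.
Qed.

Lemma det_hook (C : comNzRingType) (K : nat) (M : 'M[C]_(K.+1)) (F : nat -> nat -> C) (c : nat -> C)
 (hM : forall i j : 'I_K.+1, M i j = F i j)
 (h1 : forall i j, (j < i)%N -> F i.+1 j = 0)
 (h1' : forall i, F i.+1 i = 1)
 (h0 : forall j, (j <= K)%N -> F 0%N j = \sum_(p < K) c p * F p.+1 j + (j == K)%:R * c K) :
 \det M = (-1) ^+ K * c K.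
Proof.
pose E : 'M[C]_(K.+1) := \matrix_(i, j) if (i : nat) == 0%N then (if (j : nat) == 0%N then 1 else c (j.-1)) else ((i : nat) == j)%:R.
pose N : 'M[C]_(K.+1) := \matrix_(i, j) if (i : nat) == 0%N then ((j : nat) == K)%:R * c K else F i j.
have -> : M = E *m N.
  apply/matrixP => i j; rewrite !mxE hM.
  have [i0|inz] := eqVneq (i : nat) 0%N.
    rewrite big_ord_recl !mxE /= i0 (h0 _ (ltn_ord j)) /= mul1r addrC; congr (_ + _).
    by apply: eq_bigr => k _; rewrite !mxE i0 /=.
  rewrite (bigD1 i) //= big1 ?addr0.
    by rewrite /E /N !mxE (negbTE inz) eqxx mul1r.
  by move=> k kn; rewrite /E /N !mxE (negbTE inz) (_ : (i : nat) == k = false) ?mul0r //; apply/negbTE; apply: contra kn => /eqP e; apply/eqP/val_inj.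
rewrite det_mulmx.
have -> : \det E = 1.
  apply: det_unit_upper => [i j ji|i]; rewrite /E mxE.
    case: eqP => [e|_]; first by rewrite e in ji.
    by rewrite (_ : (i : nat) == j = false) //; apply/negbTE; rewrite neq_ltn ji orbT.
  by case: eqP => // e; rewrite eqxx.
rewrite mul1r (expand_det_row _ ord0) (bigD1 ord_max) //= big1 ?addr0.
  rewrite /N !mxE /= eqxx mul1r /cofactor add0n mulrCA; congr (_ * _).
  rewrite det_unit_upper ?mulr1 // => [i j ji|i]; rewrite !mxE /=.
    rewrite /bump /= (_ : (K <= j)%N = false); last by have := ltn_ord j; rewrite /=; lia.
    by rewrite add0n add1n h1.
  rewrite /bump /= (_ : (K <= i)%N = false); last by have := ltn_ord i; rewrite /=; lia.
  by rewrite add0n add1n h1'.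
move=> j jn; rewrite /N !mxE /= (_ : (j : nat) == K = false) ?mul0r //.
by apply/negbTE; apply: contra jn => /eqP e; apply/eqP/val_inj.
Qed.

Lemma qpowD (R : realType) m n (a b : R) : @qpow R m n a * qpow m n b = qpow m n (a + b).
Proof.
rewrite /qpow.
set N := (m + n + 1)%:R.
have -> : 2 * pi * (a + b) / N = 2 * pi * a / N + 2 * pi * b / N by rewrite -mulrDl mulrDr.
rewrite cosD sinD.
by congr Complex; ring.
Qed.
Lemma qpow0 (R : realType) m n : @qpow R m n 0 = 1.
Proof. by rewrite /qpow !mulr0 mul0r cos0 sin0. Qed.
Lemma qpowN (R : realType) m n (a : R) : @qpow R m n a * qpow m n (- a) = 1.
Proof. by rewrite qpowD subrr qpow0. Qed.

Lemma qpowE (R : realType) m n (a b : R) : a = b -> @qpow R m n a = qpow m n b.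
Proof. by move->. Qed.

Lemma yk_shift (R : realType) m n y (a p : int) (x lam : Cx R) :
  @yk R m n y a (x * qpow m n (- p%:~R)) (lam * qpow m n p%:~R)
  = qpow m n (- (n%:R * p%:~R / 2)) * yk m n y (a + p) x lam.
Proof.
rewrite /yk -!mulrA !qpowD [RHS]mulrA qpowD.
congr (qpow _ _ _ * y (_ * qpow _ _ _) (_ * qpow _ _ _)).
- rewrite intrD; ring.
- rewrite ?intrD; ring.
- rewrite ?intrD; ring.
Qed.

Lemma rel (R : realType) m n y (S : nat -> Cx R -> 'M[Cx R]_(n.+1))
  (hS : forall l : nat, (1 <= l)%N -> forall lam x : Cx R,
     @Phi R m n y 0 x lam = @Phi R m n y l%:Z x lam *m S l lam)
  (t : nat) (ht : (1 <= t)%N) (p : int) (lam x : Cx R) :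
  yk m n y p x lam = \sum_(i < n.+1) S t (lam * qpow m n p%:~R) i ord0 * yk m n y (p + t%:Z + i%:Z) x lam.
Proof.
have := congr1 (fun M : 'M[Cx R]_(n.+1) => M ord0 ord0) (hS t ht (lam * qpow m n p%:~R) (x * qpow m n (- p%:~R))).
rewrite /Phi !mxE /=.
under eq_bigr do rewrite !mxE /=.
rewrite yk_shift.
under eq_bigr do rewrite yk_shift.
move/(congr1 (fun z => qpow m n (n%:R * p%:~R / 2) * z)).
rewrite mulrA qpowN mul1r add0r => ->.
rewrite mulr_sumr; apply: eq_bigr => i _.
rewrite !mulrA qpowN mul1r mulrC (_ : p + t%:Z + i%:Z = t%:Z + i%:Z + p) ?mulrA //; ring.
Qed.

Definition aa {R : realType} {n} (S : nat -> Cx R -> 'M[Cx R]_(n.+1)) (t : int) (mu : Cx R) : Cx R :=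
  match t with Posz p.+1 => S p.+1 mu ord0 ord0 | Posz 0 => 1 | Negz _ => 0 end.


Lemma star (R : realType) m n y (S : nat -> Cx R -> 'M[Cx R]_(n.+1))
  (hind : forall (k : int) (lam : Cx R) (c : 'I_n.+1 -> Cx R),
     (forall x : Cx R, \sum_(j < n.+1) c j * @yk R m n y (k + j%:Z) x lam = 0) ->
     forall j, c j = 0)
  (hS : forall l : nat, (1 <= l)%N -> forall lam x : Cx R,
     @Phi R m n y 0 x lam = @Phi R m n y l%:Z x lam *m S l lam)
  (l : nat) (hl : (1 <= l)%N) (j : 'I_n.+1) (lam : Cx R) :
  S (l + j)%N lam ord0 ord0 =
  \sum_(p < n.+1) S l lam p ord0 * aa S (j%:Z - p%:Z) (lam * qpow m n ((l + p)%N%:Z)%:~R).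
Proof.
pose h (p r : 'I_n.+1) : Cx R := if (p < j)%N then S (j - p)%N (lam * qpow m n ((l + p)%N%:Z)%:~R) r ord0
   else ((r : nat) == (p - j)%N)%:R.
have hY : forall p : 'I_n.+1, forall x, \sum_(r < n.+1) h p r * yk m n y ((l + j)%N%:Z + r%:Z) x lam
     = yk m n y ((l + p)%N%:Z) x lam.
  move=> p x; rewrite /h; case: ltnP => hpj.
    rewrite (@rel _ _ _ _ _ hS (j - p)%N) ?subn_gt0 //; apply: eq_bigr => r _.
    congr (_ * yk _ _ _ _ _ _); rewrite -!PoszD; congr (Posz _); lia.
  have hr : (p - j < n.+1)%N by have := ltn_ord p; lia.
  rewrite (bigD1 (Ordinal hr)) //= eqxx mul1r big1 ?addr0.
    by rewrite -PoszD; congr (yk _ _ _ (Posz _) _ _); lia.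
  move=> r hr'; case: eqP => [e|]; last by rewrite mul0r.
  by case/eqP: hr'; apply: val_inj.
have key := hind ((l + j)%N%:Z) lam (fun r => S (l + j)%N lam r ord0 - \sum_(p < n.+1) S l lam p ord0 * h p r).
have hk : forall x, \sum_(r < n.+1) (S (l + j)%N lam r ord0 - \sum_(p < n.+1) S l lam p ord0 * h p r) * yk m n y ((l + j)%N%:Z + r%:Z) x lam = 0.
  move=> x; under eq_bigr do rewrite mulrBl mulr_suml.
  rewrite sumrB exchange_big /=.
  under [X in _ - X]eq_bigr do under eq_bigr do rewrite -mulrA.
  under [X in _ - X]eq_bigr do rewrite -mulr_sumr hY.
  have e1 : yk m n y 0 x lam = \sum_(r < n.+1) S (l + j)%N lam r ord0 * yk m n y ((l + j)%N%:Z + r%:Z) x lam.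
    rewrite (@rel _ _ _ _ _ hS (l + j)%N _ 0) ?addn_gt0 ?hl //.
    by apply: eq_bigr => r _; rewrite add0r mulr0z qpow0 mulr1.
  have e2 : yk m n y 0 x lam = \sum_(r < n.+1) S l lam r ord0 * yk m n y ((l + r)%N%:Z) x lam.
    rewrite (@rel _ _ _ _ _ hS l _ 0) //.
    by apply: eq_bigr => r _; rewrite add0r mulr0z qpow0 mulr1 PoszD.
  by rewrite -e1 -e2 subrr.
move: (key hk ord0) => /eqP; rewrite subr_eq0 => /eqP ->.
apply: eq_bigr => p _; congr (_ * _); rewrite /h /aa.
case: ltnP => hpj.
  rewrite subzn ?(ltnW hpj) //.
  by case E: (j - p)%N => [|s]; [lia|].
have [e|ne] := eqVneq (p : nat) j.
  by rewrite e subnn subrr eqxx.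
have -> : (j%:Z - p%:Z) = Negz (p - j.+1)%N by rewrite NegzE; lia.
have : (0 < p - j)%N by lia.
by case: (p - j)%N.
Qed.


Lemma T1aa (R : realType) m n (S : nat -> Cx R -> 'M[Cx R]_(n.+1)) (t : int) (mu : Cx R) :
  T1 m S t mu = aa S t (mu * qpow m n (- ((t - 1)%:~R) / 2)).
Proof.
case: t => [[|p]|p] //=.
congr (S _ (_ * qpow _ _ _) _ _).
rewrite intrD (_ : (-1)%:~R = -1) // -[p.+1%:~R]/(p.+1%:R) -addn1 natrD. ring.
Qed.


Lemma qarg (R : realType) m n (lam : Cx R) a b c d : a + b + c = d ->
  qpow m n a * lam * qpow m n b * qpow m n c = lam * @qpow R m n d.
Proof. by move=> <-; rewrite [qpow m n a * lam]mulrC -!mulrA !qpowD addrA. Qed.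

Theorem theorem3 (R : realType) (n m : nat) (hn : (1 <= n)%N) (hm : (1 <= m)%N)
  (y : Cx R -> Cx R -> Cx R) (S : nat -> Cx R -> 'M[Cx R]_(n.+1)) :
  (forall (lam : Cx R) (i : nat), (i <= n)%N ->
     forall x : Cx R, derivable (derive1n i (fun z : Cx R => y z lam)) x 1) ->
  (forall lam x : Cx R,
     derive1n n.+1 (fun z : Cx R => y z lam) x
       + (-1) ^+ n * (x ^+ m + lam ^+ n.+1) * y x lam = 0) ->
  (forall (k : int) (lam : Cx R) (c : 'I_n.+1 -> Cx R),
     (forall x : Cx R, \sum_(j < n.+1) c j * @yk R m n y (k + j%:Z) x lam = 0) ->
     forall j, c j = 0) ->
  (forall l : nat, (1 <= l)%N -> forall lam x : Cx R,
     @Phi R m n y 0 x lam = @Phi R m n y l%:Z x lam *m S l lam) ->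
  forall (l : nat), (1 <= l)%N -> forall (k : 'I_n.+1) (lam : Cx R),
    S l lam k ord0 =
      (-1) ^+ (k.+1 + 1) *
      @Tmu R m n S (l :: nseq k 1%N)
        (@qpow R m n ((l%:R + (k.+1)%:R - 2) / 2) * lam).
Proof.
move=> _ _ hind hS l hl k lam.
pose cn (p : nat) := S l lam (inord p) ord0.
pose Fn (i j : nat) := if i is p.+1 then aa S (j%:Z - p%:Z) (lam * qpow m n ((l + p)%N%:Z)%:~R)
   else S (l + j)%N lam ord0 ord0.
rewrite /Tmu (@det_hook _ (size (nseq k 1%N)) _ Fn cn).
- rewrite size_nseq /cn inord_val mulrA -exprD.
  by rewrite (_ : (k.+1 + 1 + k = 2 * (k + 1))%N) ?exprM ?sqrrN ?expr1n ?mul1r //; lia.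
- move=> i j; rewrite mxE T1aa.
  case: i => [[|p] hi] /=.
    rewrite (@qarg _ _ _ _ _ _ _ 0) ?qpow0 ?mulr1; last first.
      move: (nat_of_ord j) => jn; rewrite size_nseq !intrD !intrN. ring.
    have -> : (l%:Z - 1 + (j.+1)%:Z) = Posz (l + j).-1.+1 by lia.
    by rewrite /= prednK // addn_gt0 hl.
  have hpk : (p < k)%N by move: hi; rewrite size_nseq.
  rewrite nth_nseq hpk (@qarg R _ _ _ _ _ _ ((l + p)%N%:R)); last first.
    move: (nat_of_ord j) => jn; rewrite size_nseq !intrD !intrN natrD; lra.
  by congr (aa S _ _); lia.
- move=> i j ji /=; have -> : (j%:Z - i%:Z) = Negz (i - j.+1)%N by rewrite NegzE; lia.
  by [].
- by move=> i /=; rewrite subrr.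
- move=> j; rewrite size_nseq => hj /=.
  have hjn : (j < n.+1)%N by have := ltn_ord k; lia.
  have := @star _ _ _ _ _ hind hS _ hl (Ordinal hjn) lam; rewrite /= => ->.
  rewrite (eq_bigr (fun p : 'I_n.+1 => cn p * aa S (j%:Z - (p : nat)%:Z) (lam * qpow m n ((l + p)%N%:Z)%:~R))); last first.
    by move=> p _; rewrite /cn inord_val.
  rewrite -(big_mkord xpredT (fun p => cn p * aa S (j%:Z - p%:Z) (lam * qpow m n ((l + p)%N%:Z)%:~R))).
  rewrite (big_cat_nat _ (n := k.+1)) //=.
  rewrite [X in _ + X]big_nat_cond [X in _ + X]big1 ?addr0; last first.
    move=> p /andP[/andP[kp _] _].
    have -> : (j%:Z - p%:Z) = Negz (p - j.+1)%N by rewrite NegzE; lia.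
    by rewrite /= mulr0.
  rewrite big_nat_recr //= big_mkord mulrC; congr (_ + _).
  have [e|ne] := eqVneq j k.
    by rewrite e subrr /= mul1r.
  have -> : (j%:Z - k%:Z) = Negz (k - j.+1)%N by rewrite NegzE; lia.
  by [].
Qed.
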